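(* For a positive integer $d$, let $s(d)$ be the number of positive integers $e<d$ such that $e\mid d$ and $(e+1)\mid(d+1)$. Let $S(N)=\sum_{d=1}^N s(d)$. Then $$S(N) = N + O(N^{1/2}) \quad\text{as } N\to\infty,$$ and $\sup_{d\ge1} s(d) = \infty$.
   Context: Here $s(d)$ is the number of ''neat Sylvester-type'' canonical forms of degree $d$. These are representations of a general binary $d$-ic as a sum of $r$ forms of degree $e$ raised to the power $d/e$, where $r(e+1)=d+1$ and $e<d$. *)

(* Defs.v *)
From mathcomp Require Import all_boot all_order all_algebra.
Set Implicit Arguments. Unset Strict Implicit. Unset Printing Implicit Defensive.

Definition s (d : nat) : nat :=
  #|[set e : 'I_d | (0 < e)%N && (e %| d)%N && (e.+1 %| d.+1)%N]|.

Definition Ssum (N : nat) : nat := (\sum_(1 <= d < N.+1) s d)%N.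

(* Main.v *)
Require Import Defs.
From mathcomp Require Import all_boot.
From Stdlib Require Import Reals.
From mathcomp Require Import zify.
From Stdlib Require Import Lra Psatz.
Set Implicit Arguments.
Definition G (N K : nat) : nat := \sum_(1 <= e < K.+1) (N - e) %/ (e * e.+1).

Lemma cond_eq (e d : nat) : 0 < e -> e < d ->
  (e %| d) && (e.+1 %| d.+1) = (e * e.+1 %| d - e).
Proof.
move=> e0 ed.
rewrite (Gauss_dvd _ (coprimenS e)).
have -> : d = (d - e) + e by rewrite subnK // ltnW.
have -> : (d - e + e).+1 = (d - e + e) - e + e.+1 by rewrite addnK addnS.
by rewrite addnK dvdn_addl // dvdn_addl.
Qed.

Lemma s_sum (N : nat) : s N.+1 = \sum_(1 <= e < N.+1) (e * e.+1 %| N.+1 - e).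
Proof.
rewrite /s cardsE -sum1_card big_mkcond /=.
rewrite -(big_mkord xpredT (fun e => if (0 < e) && (e %| N.+1) && (e.+1 %| N.+2) then 1 else 0)).
rewrite big_ltn //= add0n.
apply: eq_big_nat => e /andP [e0 eN].
rewrite -andbA e0 /= cond_eq //; by case: (_ %| _).
Qed.

Lemma Ssum_G (N : nat) : Ssum N = G N N.
Proof.
elim: N => [|N IH]; first by rewrite /Ssum /G !big_geq.
rewrite /Ssum big_nat_recr //= -/(Ssum N) IH s_sum /G.
rewrite [in RHS]big_nat_recr //= subnn div0n addn0.
rewrite -big_split /=.
apply: eq_big_nat => e /andP [e0 eN].
have -> : N.+1 - e = (N - e).+1 by rewrite subSn.
by rewrite divnS ?muln_gt0 ?e0 //; apply: addnC.
Qed.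

Lemma G_mono (N K L : nat) : K <= L -> G N K <= G N L.
Proof.
elim: L => [|L IH]; first by rewrite leqn0 => /eqP ->.
rewrite leq_eqVlt => /orP [/eqP -> // | ].
rewrite ltnS => /IH H.
apply: (leq_trans H); rewrite /G [X in _ <= X]big_nat_recr //=; exact: leq_addr.
Qed.

Lemma INR_leq m n : m <= n -> (INR m <= INR n)%R.
Proof. by move/leP; apply: le_INR. Qed.
Lemma INR_ltn m n : m < n -> (INR m < INR n)%R.
Proof. by move/ltP; apply: lt_INR. Qed.
Lemma INR_mul m n : INR (m * n) = (INR m * INR n)%R.
Proof. by rewrite -mult_INR. Qed.
Lemma INR_add m n : INR (m + n) = (INR m + INR n)%R.
Proof. by rewrite -plus_INR. Qed.

Lemma G_S N K : G N K.+1 = G N K + (N - K.+1) %/ (K.+1 * K.+2).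
Proof. by rewrite /G big_nat_recr. Qed.

Lemma G_bounds N K :
  (INR (G N K) <= INR N - INR N / (INR K + 1))%R /\
  (INR N - INR N / (INR K + 1) - 2 * INR K <= INR (G N K))%R.
Proof.
elim: K => [|K [IH1 IH2]].
  rewrite /G big_geq //=; split; lra.
rewrite G_S.
set f := (N - K.+1) %/ (K.+1 * K.+2).
have hf1 : f * (K.+1 * K.+2) <= N.
  apply: leq_trans (leq_divM _ _) _; exact: leq_subr.
have hf2 : N < f.+1 * (K.+1 * K.+2) + K.+1.
  have := ltn_ceil (N - K.+1) (isT : 0 < K.+1 * K.+2); rewrite -/f.
  set P := f.+1 * _; lia.
move: hf1 hf2 => /INR_leq hf1 /INR_ltn hf2.
rewrite !INR_mul in hf1; rewrite INR_add !INR_mul in hf2.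
rewrite INR_add S_INR.
rewrite !S_INR in hf1 hf2.
have k0 := pos_INR K.
set k := INR K in hf1 hf2 IH1 IH2 k0 *.
set a := INR N in hf1 hf2 IH1 IH2 *.
have f0 := pos_INR f.
set x := INR f in hf1 hf2 f0 *.
have e1 : (a / (k + 1) - a / (k + 1 + 1) = a / ((k+1)*(k+1+1)))%R by field; lra.
have e2 : (x <= a / ((k+1)*(k+1+1)))%R.
  apply: (Rmult_le_reg_r ((k+1)*(k+1+1))); first nra.
  by rewrite /Rdiv Rmult_assoc Rinv_l; [lra | nra].
have e3 : ((a - (k+1)) / ((k+1)*(k+1+1)) - 1 < x)%R.
  apply: (Rmult_lt_reg_r ((k+1)*(k+1+1))); first nra.
  rewrite Rmult_minus_distr_r /Rdiv Rmult_assoc Rinv_l; nra.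
have e4 : ((a - (k+1)) / ((k+1)*(k+1+1)) = a / ((k+1)*(k+1+1)) - 1 / (k+1+1))%R
  by field; lra.
have e5 : (0 <= 1 / (k+1+1) <= 1)%R.
  split; first by apply: Rlt_le; apply: Rdiv_lt_0_compat; lra.
  apply: (Rmult_le_reg_r (k+1+1)); first lra.
  rewrite /Rdiv Rmult_assoc Rinv_l; lra.
split; lra.
Qed.

Lemma unbounded (M : nat) : exists d : nat, (1 <= d) /\ (M <= s d).
Proof.
set m := (M.+2)`!.
have mM : M.+2 <= m by exact: fact_geq.
have p0 : forall n, 0 < expn 2 n by move=> n; rewrite expn_gt0.
have lt_e : forall i : 'I_M, (expn 2 i.+1).-1 < (expn 2 m).-1.
  move=> i; have := ltn_ord i => iM.
  have : expn 2 i.+1 < expn 2 m by rewrite ltn_exp2l //; lia.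
  have := p0 i.+1; lia.
exists (expn 2 m).-1; split.
  have : expn 2 1 < expn 2 m by rewrite ltn_exp2l //; lia.
  rewrite expn1; lia.
pose f (i : 'I_M) : 'I_((expn 2 m).-1) := Ordinal (lt_e i).
have finj : injective f.
  move=> i j /(congr1 val) /= h; apply: val_inj => /=.
  have : expn 2 i.+1 = expn 2 j.+1 by have := p0 i.+1; have := p0 j.+1; lia.
  by move/eqP; rewrite eqn_exp2l // => /eqP [].
rewrite /s -{1}(card_ord M) -(card_imset [pred x | true] finj).
apply: subset_leq_card; apply/subsetP => x /imsetP [i _ ->].
rewrite inE /=.
have i2 : 1 < expn 2 i.+1.
  have : expn 2 0 < expn 2 i.+1 by rewrite ltn_exp2l.
  by rewrite expn0.
apply/andP; split; first (apply/andP; split).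
- lia.
- have [k hk] : exists k, m = i.+1 * k.
    have : i.+1 %| m by rewrite dvdn_fact //; have := ltn_ord i; lia.
    by move/dvdnP => [k ->]; exists k; rewrite mulnC.
  by rewrite hk expnM dvdn_pred_predX.
- rewrite !prednK ?p0 //; apply: dvdn_exp2l; have := ltn_ord i; lia.
Qed.

Theorem theorem4p5 :
  (exists (C : R) (N0 : nat), forall N : nat, (N0 <= N)%N ->
      (Rabs (INR (Ssum N) - INR N) <= C * sqrt (INR N))%R)
  /\ (forall M : nat, exists d : nat, (1 <= d)%N /\ (M <= s d)%N).
Proof.
split; last exact: unbounded.
exists 3%R, 0%N => N _.
rewrite Ssum_G.
set K := Nat.sqrt N.
have [h1 _] := G_bounds N N.
have [_ h3] := G_bounds N K.
have mono : (INR (G N K) <= INR (G N N))%R.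
  apply: INR_leq; apply: G_mono; apply/leP; exact: Nat.sqrt_le_lin.
have [s1 s2] := Nat.sqrt_spec' N.
move: s1 s2 => /le_INR s1 /lt_INR s2.
rewrite !mult_INR S_INR -/K in s1 s2.
have k0 := pos_INR K.
have a0 := pos_INR N.
set k := INR K in s1 s2 h3 mono k0 *.
set a := INR N in s1 s2 h1 h3 a0 *.
have u0 : (0 <= a / (a + 1))%R.
  apply: Rmult_le_pos => //; apply: Rlt_le; apply: Rinv_0_lt_compat; lra.
have t0 := sqrt_pos a.
have tt := sqrt_sqrt a a0.
set t := sqrt a in t0 tt *.
have kt : (k <= t)%R by nra.
have tk : (t <= k + 1)%R by nra.
have ew : (a / (k + 1) * (k + 1) = a)%R by field; lra.
set w := (a / (k + 1))%R in h3 ew.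
have wt : (w <= t)%R by nra.
apply: Rabs_le; split; lra.
Qed.
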